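(* Let $\Sigma$ be a finite alphabet, $S=s_0\cdots s_{m-1}\in\Sigma^m$, and $a,a'\in\Sigma^m$ with $\mathrm{rep}_{\mathrm{Sub}(S)}(a)=\mathrm{rep}_{\mathrm{Sub}(S)}(a')$. Then $f^S_{\mathrm{B(N)DM}}(a)=f^S_{\mathrm{B(N)DM}}(a')$ and $g^S_{\mathrm{B(N)DM}}(a)=g^S_{\mathrm{B(N)DM}}(a')$.
   Context: $\mathrm{Sub}(S)$ is the set of all substrings of $S$, including $\varepsilon$; $\mathrm{rep}_{\mathrm{Sub}(S)}(a)$ is the longest suffix of $a$ that is a substring of $S$. Let $S^{\mathrm{rev}}=s_{m-1}\cdots s_0$. The suffix automaton of $S^{\mathrm{rev}}$ is the deterministic automaton accepting exactly the suffixes of $S^{\mathrm{rev}}$, extended with a non-accepting sink FAIL entered as soon as the string read so far is not a substring of $S^{\mathrm{rev}}$. A window $w=w_0\cdots w_{m-1}$ is read from right to left, i.e. the automaton reads $w^{\mathrm{rev}}=w_{m-1}\cdots w_0$. Let $j^S_w$ be the number of transitions performed before entering FAIL (not counting the transition into FAIL). Cost: $f^S_{\mathrm{B(N)DM}}(w)=m$ if $w=S$, otherwise $j^S_w+1$. Let $\mathcal{I}^S(w)\subseteq\{0,\dots,m-1\}$ be the set of $i$ such that the automaton is in an accepting state after reading $i$ characters of $w^{\mathrm{rev}}$ (equivalently, $w_{m-i}\cdots w_{m-1}$ is a prefix of $S$). Shift: $g^S_{\mathrm{B(N)DM}}(w)=\min\{m-i: i\in\mathcal{I}^S(w)\}$.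 *)

(* Defs.v *)
From mathcomp Require Import all_boot.
Set Implicit Arguments. Unset Strict Implicit. Unset Printing Implicit Defensive.

Section Defs.
Variable T : finType.

Definition is_sub (S x : seq T) : bool := infix x S.

(* rep_{Sub(S)}(a): the longest suffix of a that is a substring of S.
   Suffixes of a are drop k a, k = 0 .. size a; take the smallest such k. *)
Definition rep_sub (S a : seq T) : seq T :=
  drop (find (fun k => is_sub S (drop k a)) (iota 0 (size a).+1)) a.

(* The suffix automaton of S^rev (with sink FAIL) reading w^rev: after reading
   i characters the string read is take i (rev w); the automaton is in FAIL
   iff this string is not a substring of rev S (FAIL is absorbing, and
   substrings are closed under prefixes).  j^S_w = number of transitions
   performed before entering FAIL = index of the first step i+1 (i < m)
   whose read string is not a substring of rev S, or m if there is none. *)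
Definition jBDM (S w : seq T) : nat :=
  let m := size S in
  find (fun i => ~~ is_sub (rev S) (take i.+1 (rev w))) (iota 0 m).

Definition fBDM (S w : seq T) : nat :=
  if w == S then size S else (jBDM S w).+1.

(* Accepting state after reading i characters: the string read is a suffix
   of S^rev. *)
Definition accepting (S w : seq T) (i : nat) : bool :=
  suffix (take i (rev w)) (rev S).

(* Shift g^S_{B(N)DM}(w) = min { m - i : i in I^S(w) }, I^S(w) a subset of {0..m-1}
   (nonempty since 0 is in it; the default m of the empty min is irrelevant). *)
Definition gBDM (S w : seq T) : nat :=
  let m := size S in
  \big[minn/m]_(i < m | accepting S w i) (m - i).

End Defs.

(* Main.v *)
Require Import Defs.
From mathcomp Require Import all_boot.
From mathcomp Require Import zify.

Section H.
Variable T : finType.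
Variables (S a : seq T).

Let K := find (fun k => is_sub S (drop k a)) (iota 0 (size a).+1).

Lemma K_props : K <= size a /\ is_sub S (drop K a) /\
  forall j, j < K -> ~~ is_sub S (drop j a).
Proof.
have hs : has (fun k => is_sub S (drop k a)) (iota 0 (size a).+1).
  apply/hasP; exists (size a); first by rewrite mem_iota /= add0n ltnSn.
  by rewrite drop_size /is_sub infix0s.
have hk : K < (size a).+1 by have := hs; rewrite has_find size_iota.
split; first by [].
split.
  have := nth_find 0 hs; rewrite -/K nth_iota //.
move=> j hj; have := before_find 0 hj; rewrite nth_iota ?add0n //; lia.
Qed.

Lemma rep_size : size (rep_sub S a) = size a - K.
Proof. by rewrite /rep_sub size_drop. Qed.

Lemma sub_char i : i <= size a ->
  is_sub S (drop (size a - i) a) = (i <= size a - K).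
Proof.
move=> hi; have [h1 [h2 h3]] := K_props.
case: leqP => h.
  have -> : size a - i = (size a - K - i) + K by lia.
  rewrite -drop_drop; apply: infix_trans h2; exact: infix_drop.
apply/negbTE/h3; lia.
Qed.

Lemma drop_rep i : i <= size a - K ->
  drop (size a - i) a = drop (size (rep_sub S a) - i) (rep_sub S a).
Proof.
move=> h; rewrite rep_size /rep_sub -/K drop_drop; congr drop; have [h1 _] := K_props; lia.
Qed.

Lemma find_leq n m : n <= m -> find (fun i => n <= i) (iota 0 m) = n.
Proof.
move=> h; have -> : m = n + (m - n) by lia.
rewrite iotaD find_cat.
have -> : has (fun i => n <= i) (iota 0 n) = false.
  apply/negbTE/hasPn => x; rewrite mem_iota; lia.
rewrite size_iota add0n; case: (m - n) => [|k] //=; rewrite ?leqnn ?addn0; lia.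
Qed.

Lemma jBDM_rep : size S = size a -> jBDM S a = size (rep_sub S a).
Proof.
move=> hS; rewrite /jBDM rep_size hS.
rewrite (@eq_in_find _ _ (fun i => size a - K <= i)); last first.
  move=> i; rewrite mem_iota => /andP [_ hi].
  rewrite /is_sub take_rev infix_rev -/(is_sub S _) sub_char ?size_rev; lia.
have [h1 _] := K_props.
apply: find_leq; lia.
Qed.

Lemma accepting_rep i : size S = size a -> i < size a ->
  accepting S a i = (i <= size (rep_sub S a)) &&
     prefix (drop (size (rep_sub S a) - i) (rep_sub S a)) S.
Proof.
move=> hS hi; rewrite /accepting take_rev suffix_rev.
rewrite rep_size; case: leqP => h /=.
  by rewrite drop_rep // -rep_size.
apply/negbTE/negP => /prefixW; rewrite -/(is_sub S _) sub_char; lia.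
Qed.

Lemma eqS_rep : size S = size a -> (a == S) = (rep_sub S a == S).
Proof.
move=> hS; have [h1 [h2 h3]] := K_props.
apply/eqP/eqP => h.
  have hK : K = 0.
    case: (posnP K) => // hp; have := h3 0 hp; rewrite drop0 h /is_sub infix_refl //.
  by rewrite /rep_sub -/K hK drop0.
have : size (rep_sub S a) = size S by rewrite h.
rewrite rep_size hS => e.
have hK : K = 0 by lia.
by move: h; rewrite /rep_sub -/K hK drop0.
Qed.

End H.

Theorem lemma19 (T : finType) (m : nat) (S a a' : seq T) :
  size S = m -> size a = m -> size a' = m ->
  rep_sub S a = rep_sub S a' ->
  fBDM S a = fBDM S a' /\ gBDM S a = gBDM S a'.
Proof.
move=> hS ha ha' e; split.
  rewrite /fBDM (@eqS_rep T S a) ?hS // (@eqS_rep T S a') ?hS // e.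
  by rewrite (@jBDM_rep T S a) ?hS // (@jBDM_rep T S a') ?hS // e.
rewrite /gBDM; apply: eq_bigl => i.
have h1 : size S = size a by rewrite hS ha.
have h2 : size S = size a' by rewrite hS ha'.
have hi : i < size S := ltn_ord i.
have hi1 : i < size a by rewrite -h1.
have hi2 : i < size a' by rewrite -h2.
by rewrite (@accepting_rep T S a i h1 hi1) (@accepting_rep T S a' i h2 hi2) e.
Qed.
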